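(* Let $\mathcal Z_\nu$ be the Zorich map described in the context and assume $\nu\lambda>1/e$. For $\delta>0$ let $C_\delta=\{x\in\mathbb R^3:x_1^2+x_2^2<\delta^2\}$. Then there exist $\delta\in(0,\lambda)$ and $c>0$ such that: (a) for every $x\in C_\delta$, $p_3(\mathcal Z_\nu(x))>p_3(x)+c$, where $p_3(x_1,x_2,x_3)=x_3$; (b) for every $x\in C_\delta$ with $(x_1,x_2)\neq(0,0)$ there is $n\in\mathbb N$ with $\mathcal Z_\nu^n(x)\notin C_\delta$.
   Context: Zorich maps. Let $Q=\{(x_1,x_2)\in\mathbb R^2:|x_1|\le1,|x_2|\le1\}$. Let $L\ge1$ and let $\mathfrak h=(\mathfrak h_1,\mathfrak h_2,\mathfrak h_3)$ be a sense-preserving $L$-bi-Lipschitz map (i.e. $|a-b|/L\le|\mathfrak h(a)-\mathfrak h(b)|\le L|a-b|$) of $Q$ onto the closed upper unit hemisphere $\{x\in\mathbb R^3:|x|=1,x_3\ge0\}$, with $\partial Q$ mapped onto the equator. Assume $\mathfrak h_1(t,t)=\mathfrak h_2(t,t)$ and $\mathfrak h_1(t,-t)=-\mathfrak h_2(t,-t)$ for $t\in[-1,1]$ (so $\mathfrak h(0,0)=(0,0,1)$). Let $\lambda\ge1$ and $h(x_1,x_2)=\lambda\mathfrak h(x_1/\lambda,x_2/\lambda)$ on $\lambda Q=[-\lambda,\lambda]^2$. For $\nu>0$ set $\mathcal Z_\nu(x_1,x_2,x_3)=\nu e^{x_3}h(x_1,x_2)$ on $\lambda Q\times\mathbb R$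 (which is mapped onto $\{x_3\ge0\}$), and extend $\mathcal Z_\nu$ to $\mathbb R^3$ by repeated reflection: in the domain across the faces $x_1=(2k+1)\lambda$, $x_2=(2k+1)\lambda$ ($k\in\mathbb Z$) of the beams, and in the range across the plane $x_3=0$. *)

(* Defs.v *)
From Stdlib Require Import Reals ZArith.
Open Scope R_scope.

Definition pt2 := (R * R)%type.
Definition pt3 := (R * R * R)%type.
Definition p1 (x : pt3) : R := fst (fst x).
Definition p2 (x : pt3) : R := snd (fst x).
Definition p3 (x : pt3) : R := snd x.

Definition dist2 (a b : pt2) : R :=
  sqrt ((fst a - fst b) ^ 2 + (snd a - snd b) ^ 2).
Definition dist3 (a b : pt3) : R :=
  sqrt ((p1 a - p1 b) ^ 2 + (p2 a - p2 b) ^ 2 + (p3 a - p3 b) ^ 2).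

Definition inQ (a : pt2) : Prop :=
  Rabs (fst a) <= 1 /\ Rabs (snd a) <= 1.
Definition onbdQ (a : pt2) : Prop :=
  inQ a /\ (Rabs (fst a) = 1 \/ Rabs (snd a) = 1).

Definition upper_hemisphere (y : pt3) : Prop :=
  p1 y ^ 2 + p2 y ^ 2 + p3 y ^ 2 = 1 /\ 0 <= p3 y.
Definition equator (y : pt3) : Prop :=
  p1 y ^ 2 + p2 y ^ 2 + p3 y ^ 2 = 1 /\ p3 y = 0.

Definition orient2 (a b c : pt2) : R :=
  (fst b - fst a) * (snd c - snd a) - (snd b - snd a) * (fst c - fst a).
Definition proj12 (y : pt3) : pt2 := (p1 y, p2 y).

(* Sense-preserving: the boundary of Q, traversed counterclockwise, is mapped
   onto the equator traversed counterclockwise (seen from (0,0,1)); i.e. every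
   positively oriented triple on the boundary square is sent to a positively
   oriented triple on the equator. *)
Definition sense_preserving (hh : pt2 -> pt3) : Prop :=
  forall a b c : pt2, onbdQ a -> onbdQ b -> onbdQ c ->
    orient2 a b c > 0 -> orient2 (proj12 (hh a)) (proj12 (hh b)) (proj12 (hh c)) > 0.

Definition zorich_base (L : R) (hh : pt2 -> pt3) : Prop :=
  1 <= L /\
  (forall a b : pt2, inQ a -> inQ b ->
      dist2 a b / L <= dist3 (hh a) (hh b) /\ dist3 (hh a) (hh b) <= L * dist2 a b) /\
  sense_preserving hh /\
  (forall a : pt2, inQ a -> upper_hemisphere (hh a)) /\
  (forall y : pt3, upper_hemisphere y -> exists a : pt2, inQ a /\ hh a = y) /\
  (forall a : pt2, onbdQ a -> equator (hh a)) /\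
  (forall y : pt3, equator y -> exists a : pt2, onbdQ a /\ hh a = y) /\
  (forall t : R, -1 <= t <= 1 -> p1 (hh (t, t)) = p2 (hh (t, t))) /\
  (forall t : R, -1 <= t <= 1 -> p1 (hh (t, -t)) = - p2 (hh (t, -t))).

(* Folding of the real line by reflections across the lines (2k+1)lam:
   beam index k = floor((t + lam)/(2 lam)), so that t in [(2k-1)lam,(2k+1)lam],
   and the folded coordinate (-1)^k (t - 2 k lam) in [-lam, lam]. *)
Definition beam_index (lam t : R) : Z := (up ((t + lam) / (2 * lam)) - 1)%Z.
Definition sgnZ (k : Z) : R := if Z.even k then 1 else -1.
Definition fold (lam t : R) : R :=
  let k := beam_index lam t in sgnZ k * (t - 2 * IZR k * lam).

(* The Zorich map on R^3:  on lam Q x R it is nu e^{x3} h(x1,x2) with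
   h(x1,x2) = lam * hh(x1/lam, x2/lam); extended by reflection in the
   faces of the beams (domain) and in the plane x3 = 0 (range). *)
Definition zorich (hh : pt2 -> pt3) (lam nu : R) (x : pt3) : pt3 :=
  let k := beam_index lam (p1 x) in
  let m := beam_index lam (p2 x) in
  let y := hh (fold lam (p1 x) / lam, fold lam (p2 x) / lam) in
  let r := nu * exp (p3 x) * lam in
  ((r * p1 y, r * p2 y), sgnZ (k + m) * (r * p3 y)).

Definition cyl (delta : R) (x : pt3) : Prop := p1 x ^ 2 + p2 x ^ 2 < delta ^ 2.

(* Main.v *)
Require Import Defs.
From Stdlib Require Import Reals ZArith Lra Psatz Classical.
Open Scope R_scope.

Lemma div_nonneg a b : 0 <= a -> 0 < b -> 0 <= a / b.
Proof. intros. unfold Rdiv. apply Rmult_le_pos; [assumption| left; apply Rinv_0_lt_compat; assumption]. Qed.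

Lemma beam0 lam t : 0 < lam -> -lam < t < lam -> beam_index lam t = 0%Z.
Proof.
  intros Hl Ht. unfold beam_index.
  assert (H : (1 = up ((t + lam) / (2 * lam)))%Z).
  { apply tech_up; simpl.
    - apply Rmult_lt_reg_r with (2*lam); [lra|]. unfold Rdiv. rewrite Rmult_assoc, Rinv_l; lra.
    - assert (0 <= (t + lam) / (2 * lam)). { apply div_nonneg; lra. } lra. }
  rewrite <- H. reflexivity.
Qed.

Lemma zorich_eq hh lam nu x : 0 < lam -> -lam < p1 x < lam -> -lam < p2 x < lam ->
  zorich hh lam nu x =
  let y := hh (p1 x / lam, p2 x / lam) in
  let r := nu * exp (p3 x) * lam in ((r * p1 y, r * p2 y), r * p3 y).
Proof.
  intros Hl H1 H2. unfold zorich, fold. rewrite (beam0 lam (p1 x)), (beam0 lam (p2 x)) by assumption.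
  unfold sgnZ; simpl. replace (p1 x - 2 * 0 * lam) with (p1 x) by ring. replace (p2 x - 2 * 0 * lam) with (p2 x) by ring. rewrite !Rmult_1_l. reflexivity.
Qed.

Lemma hh0 L hh : zorich_base L hh -> hh (0,0) = ((0,0),1).
Proof.
  intros (HL & Hlip & Hsp & Hup & _ & _ & _ & Hd1 & Hd2).
  assert (A := Hd1 0 ltac:(lra)). assert (B := Hd2 0 ltac:(lra)).
  rewrite Ropp_0 in B. rewrite A in B.
  assert (Hq : inQ (0,0)) by (unfold inQ; simpl; rewrite Rabs_R0; lra).
  destruct (Hup _ Hq) as [S P].
  destruct (hh (0,0)) as [[a b] d] eqn:E. unfold p1, p2, p3 in *; simpl in *.
  assert (b = 0) by lra. subst. assert (d = 1) by nra. subst. reflexivity.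
Qed.

Lemma geo L hh a : zorich_base L hh -> inQ a ->
  (p3 (hh a) - 1)^2 <= L^2 * (fst a ^2 + snd a ^2) /\
  (fst a ^2 + snd a ^2) / (2 * L^2) <= p1 (hh a) ^2 + p2 (hh a) ^2.
Proof.
  intros Hb Ha. pose proof (hh0 L hh Hb) as E0.
  destruct Hb as (HL & Hlip & Hsp & Hup & _).
  assert (Hq : inQ (0,0)) by (unfold inQ; simpl; rewrite Rabs_R0; lra).
  destruct (Hlip a (0,0) Ha Hq) as [Lo Hi].
  destruct (Hup a Ha) as [S P].
  rewrite E0 in Lo, Hi. unfold dist2, dist3 in *. unfold p1, p2, p3 in *; cbn [fst snd] in *.
  destruct (hh a) as [[y1 y2] y3]; cbn [fst snd] in *.
  set (u := (fst a - 0) ^ 2 + (snd a - 0) ^ 2) in *.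
  set (v := (y1 - 0) ^ 2 + (y2 - 0) ^ 2 + (y3 - 1) ^ 2) in *.
  assert (Hu : 0 <= u) by (unfold u; nra). assert (Hv : 0 <= v) by (unfold v; nra).
  pose proof (pow2_sqrt u Hu). pose proof (pow2_sqrt v Hv).
  pose proof (sqrt_pos u). pose proof (sqrt_pos v).
  assert (Eu : u = fst a ^2 + snd a ^2) by (unfold u; ring).
  split.
  - assert (sqrt v ^2 <= (L * sqrt u)^2) by (apply pow_incr; split; lra).
    assert ((y3-1)^2 <= v) by (unfold v; nra).
    assert ((L * sqrt u)^2 = L^2 * u) by (replace ((L*sqrt u)^2) with (L^2*(sqrt u^2)) by ring; rewrite H; ring). rewrite <- Eu. lra.
  - assert ((sqrt u / L)^2 <= sqrt v ^2) by (apply pow_incr; split; [apply div_nonneg; lra| lra]).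
    assert (Ev : v = 2 - 2*y3) by (unfold v; nra).
    assert ((sqrt u / L)^2 = u / L^2) by (replace ((sqrt u / L)^2) with (sqrt u^2 / L^2) by (field; lra); rewrite H; reflexivity).
    assert (u / L^2 <= 2 - 2*y3) by lra.
    assert (u / (2*L^2) = (u/L^2)/2) by (field; lra).
    rewrite <- Eu. nra.
Qed.

Lemma p1_mk (a b c : R) : p1 ((a,b),c) = a. Proof. reflexivity. Qed.
Lemma p2_mk (a b c : R) : p2 ((a,b),c) = b. Proof. reflexivity. Qed.
Lemma p3_mk (a b c : R) : p3 ((a,b),c) = c. Proof. reflexivity. Qed.

Lemma step L hh lam nu delta x : zorich_base L hh -> 1 <= lam -> 0 < nu -> 0 < delta -> delta < lam ->
  cyl delta x ->
  p3 (zorich hh lam nu x) > nu*lam*exp (p3 x)*(1 - L*delta/lam) /\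
  p1 (zorich hh lam nu x)^2 + p2 (zorich hh lam nu x)^2 >= nu^2*exp (p3 x)^2*(p1 x^2+p2 x^2)/(2*L^2).
Proof.
  intros Hb Hl Hnu Hd Hdl Hc. unfold cyl in Hc.
  assert (HL : 1 <= L) by (destruct Hb; assumption).
  assert (H1 : -lam < p1 x < lam) by (split; nra).
  assert (H2 : -lam < p2 x < lam) by (split; nra).
  rewrite zorich_eq by (lra || assumption). cbv zeta.
  set (a := (p1 x / lam, p2 x / lam)).
  assert (E1 : p1 x / lam * lam = p1 x) by (field; lra).
  assert (E2 : p2 x / lam * lam = p2 x) by (field; lra).
  assert (Ha : inQ a).
  { unfold inQ, a; cbn [fst snd]; split; apply Rabs_le; split; nra. }
  destruct (geo L hh a Hb Ha) as [G1 G2].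
  assert (Er : fst a ^2 + snd a ^2 = (p1 x ^2 + p2 x^2) / lam^2) by (unfold a; cbn [fst snd]; field; lra).
  rewrite Er in G1, G2.
  set (r := nu * exp (p3 x) * lam).
  assert (Hr : 0 < r) by (unfold r; pose proof (exp_pos (p3 x)); apply Rmult_lt_0_compat; [apply Rmult_lt_0_compat|]; lra).
  set (y := hh a) in *.
  rewrite p1_mk, p2_mk, p3_mk.
  split.
  - set (k := L * delta / lam).
    assert (Hk : 0 < k) by (unfold k; unfold Rdiv; apply Rmult_lt_0_compat; [nra | apply Rinv_0_lt_compat; lra]).
    assert (Ek : k^2 - L^2 * ((p1 x ^2 + p2 x^2) / lam^2) = L^2 * (delta^2 - (p1 x ^2 + p2 x^2)) / lam^2)
      by (unfold k; field; lra).
    assert (Pk : 0 < L^2 * (delta^2 - (p1 x ^2 + p2 x^2)) / lam^2)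
      by (unfold Rdiv; apply Rmult_lt_0_compat; [apply Rmult_lt_0_compat; [nra|lra] | apply Rinv_0_lt_compat; nra]).
    assert (Hy : p3 y > 1 - k) by nra.
    replace (nu * lam * exp (p3 x)) with r by (unfold r; ring). nra.
  - replace ((r * p1 y) ^ 2 + (r * p2 y) ^ 2) with (r^2 * (p1 y ^2 + p2 y ^2)) by ring.
    replace (nu ^ 2 * exp (p3 x) ^ 2 * (p1 x ^ 2 + p2 x ^ 2) / (2 * L ^ 2))
      with (r^2 * ((p1 x ^ 2 + p2 x ^ 2) / lam ^ 2 / (2 * L ^ 2))) by (unfold r; field; lra).
    assert (r^2 * ((p1 x ^ 2 + p2 x ^ 2) / lam ^ 2 / (2 * L ^ 2)) <= r^2 * (p1 y ^2 + p2 y ^2)) by (apply Rmult_le_compat_l; [nra | exact G2]). lra.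
Qed.

Theorem lemma4p2 (L lam nu : R) (hh : pt2 -> pt3) :
  zorich_base L hh -> 1 <= lam -> 0 < nu -> nu * lam > / exp 1 ->
  exists delta c : R, 0 < delta /\ delta < lam /\ 0 < c /\
    (forall x : pt3, cyl delta x -> p3 (zorich hh lam nu x) > p3 x + c) /\
    (forall x : pt3, cyl delta x -> (p1 x, p2 x) <> (0, 0) ->
       exists n : nat, ~ cyl delta (Nat.iter n (zorich hh lam nu) x)).
Proof.
  intros Hb Hl Hnu Hnl.
  assert (HL : 1 <= L) by (destruct Hb; assumption).
  pose proof (exp_pos 1) as He1.
  set (s := nu*lam*exp 1).
  assert (Hs : 1 < s).
  { unfold s. assert (/ exp 1 * exp 1 = 1) by (field; lra).
    apply Rmult_gt_compat_r with (r := exp 1) in Hnl; lra. }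
  set (e := (s-1)/(2*s)).
  assert (Ee : e * (2*s) = s - 1) by (unfold e; field; lra).
  assert (He0 : 0 < e) by nra.
  assert (He1' : e < 1/2) by nra.
  set (delta := lam*e/(2*L)).
  assert (Ed : delta * (2*L) = lam * e) by (unfold delta; field; lra).
  assert (Hd0 : 0 < delta) by nra.
  assert (Hdl : delta < lam) by nra.
  assert (Ek : L*delta/lam = e/2) by (unfold delta; field; lra).
  set (A := s*(1 - e/2)).
  assert (HA : 1 < A) by (unfold A; nra).
  set (c := ln A / 2).
  assert (Hc : 0 < c).
  { unfold c. pose proof (ln_increasing 1 A ltac:(lra) HA). rewrite ln_1 in H. lra. }
  assert (Ha : forall x, cyl delta x -> p3 (zorich hh lam nu x) > p3 x + c).
  { intros x Hx. destruct (step L hh lam nu delta x Hb Hl Hnu Hd0 Hdl Hx) as [S1 _].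
    rewrite Ek in S1.
    assert (Eq : nu * lam * exp (p3 x) * (1 - e / 2) = exp (ln A + p3 x + Ropp 1)).
    { rewrite !exp_plus, exp_ln, exp_Ropp by lra. unfold A, s. field. lra. }
    pose proof (exp_ineq1_le (ln A + p3 x + Ropp 1)). unfold c in *. lra. }
  set (K := nu^2/(2*L^2)).
  assert (HK : 0 < K) by (unfold K; unfold Rdiv; apply Rmult_lt_0_compat; [nra | apply Rinv_0_lt_compat; nra]).
  assert (Hrad : forall x, cyl delta x ->
     p1 (zorich hh lam nu x)^2 + p2 (zorich hh lam nu x)^2 >= K * exp (p3 x)^2 * (p1 x^2 + p2 x^2)).
  { intros x Hx. destruct (step L hh lam nu delta x Hb Hl Hnu Hd0 Hdl Hx) as [_ S2].
    replace (K * exp (p3 x)^2 * (p1 x^2 + p2 x^2)) with (nu^2*exp (p3 x)^2*(p1 x^2+p2 x^2)/(2*L^2))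
      by (unfold K; field; lra). exact S2. }
  exists delta, c. split; [lra|]. split; [lra|]. split; [lra|]. split; [exact Ha|].
  intros x Hx Hne. apply NNPP. intro Hno.
  assert (Hall : forall n, cyl delta (Nat.iter n (zorich hh lam nu) x)).
  { intro n. apply NNPP. intro Hn. apply Hno. exists n. exact Hn. }
  set (X := fun n => Nat.iter n (zorich hh lam nu) x) in *.
  assert (XS : forall n, X (S n) = zorich hh lam nu (X n)) by reflexivity.
  set (rho := fun y : pt3 => p1 y ^2 + p2 y ^2).
  assert (h3 : forall n, p3 (X n) >= p3 x + INR n * c).
  { induction n as [|n IH].
    - simpl. lra.
    - rewrite XS, S_INR. pose proof (Ha (X n) (Hall n)). lra. }
  assert (hpos : forall n, 0 < rho (X n)).
  { induction n as [|n IH].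
    - unfold rho. change (X 0%nat) with x. destruct (Req_dec (p1 x) 0) as [E1|E1].
      + destruct (Req_dec (p2 x) 0) as [E2|E2].
        * exfalso. apply Hne. rewrite E1, E2. reflexivity.
        * pose proof (Rsqr_pos_lt _ E2). unfold Rsqr in *. nra.
      + pose proof (Rsqr_pos_lt _ E1). unfold Rsqr in *. nra.
    - unfold rho in *. rewrite XS. pose proof (Hrad (X n) (Hall n)).
      pose proof (exp_pos (p3 (X n))).
      assert (0 < K * exp (p3 (X n)) ^ 2 * (p1 (X n) ^ 2 + p2 (X n) ^ 2)).
      { apply Rmult_lt_0_compat; [apply Rmult_lt_0_compat; [lra | nra] | lra]. }
      lra. }
  set (T := ln (2/K) / 2).
  destruct (INR_archimed c (T - p3 x) ltac:(lra)) as [N HN].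
  assert (Hdbl : forall m, rho (X (S (N + m)%nat)) >= 2 * rho (X (N + m)%nat)).
  { intro m. unfold rho at 1. rewrite XS. pose proof (Hrad (X (N+m)%nat) (Hall (N+m)%nat)) as R1.
    pose proof (h3 (N+m)%nat) as R2. rewrite plus_INR in R2.
    pose proof (pos_INR m).
    assert (T < p3 (X (N+m)%nat)) by nra.
    assert (exp T < exp (p3 (X (N+m)%nat))) by (apply exp_increasing; assumption).
    assert (ET : exp T ^ 2 = 2 / K).
    { replace (exp T ^2) with (exp (T + T)) by (rewrite exp_plus; ring).
      unfold T. replace (ln (2/K)/2 + ln (2/K)/2) with (ln (2/K)) by field.
      apply exp_ln. unfold Rdiv. apply Rmult_lt_0_compat; [lra| apply Rinv_0_lt_compat; lra]. }
    pose proof (exp_pos T).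
    assert (exp T ^2 <= exp (p3 (X (N+m)%nat))^2) by (apply pow_incr; lra).
    assert (K * (2/K) = 2) by (field; lra).
    assert (2 <= K * exp (p3 (X (N+m)%nat))^2) by nra.
    pose proof (hpos (N+m)%nat). unfold rho in *. nra. }
  assert (Hlin : forall m, rho (X (N + m)%nat) >= (1 + INR m) * rho (X N)).
  { induction m as [|m IH].
    - rewrite Nat.add_0_r. simpl. lra.
    - rewrite Nat.add_succ_r, S_INR. pose proof (Hdbl m). pose proof (hpos N). pose proof (pos_INR m). nra. }
  destruct (INR_archimed (rho (X N)) (delta^2) (hpos N)) as [m Hm].
  pose proof (Hlin m). pose proof (Hall (N+m)%nat). unfold cyl in *. fold (X (N+m)%nat) in *.
  unfold rho in *. nra.
Qed.
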